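(* Let $G=(V,E)$ be a simple, unoriented, locally finite graph with graph distance $d$, and let $x\neq x'$ be two vertices of $G$ at finite distance, each of positive degree. For $t\in[0,1]$ let $K^t$ denote the set of couplings between the lazy random walk measures $\mu^t_x$ and $\mu^t_{x'}$, viewed as nonnegative real matrices indexed by $B_x\times B_{x'}$, and let $E_{xx'}$ be the matrix of this size whose only nonzero entry is a $1$ at position $(x,x')$. Then there exists $t_0>0$ such that for all $s,t\in(0,t_0]$, $$K^{s}-E_{xx'}=\frac{s}{t}\,\bigl(K^t-E_{xx'}\bigr),$$ i.e. $K^s$ and $K^t$ are homothetic with center $E_{xx'}$ and ratio $s/t$.
   Context: For a vertex $x$, $S_x=\{y\in V: y\sim x\}$ is the set of neighbours of $x$, $d_x=|S_x|$ its degree, and $B_x=\{x\}\cup S_x$. The graph distance $d(x,x')$ is the length of a shortest edge path from $x$ to $x'$. The lazy random walk is the probability measure $\mu^t_x$ on $V$ with $\mu^t_x(x)=1-t$, $\mu^t_x(y)=t/d_x$ for $y\in S_x$, and $\mu^t_x(y)=0$ otherwise. A coupling between probability measures $\mu,\mu'$ on $V$ is a nonnegative function $\xi$ on $V\times V$ with $\sum_{y'}\xi(y,y')=\mu(y)$ for all $y$ and $\sum_y\xi(y,y')=\mu'(y')$ for all $y'$; a coupling between $\mu^t_x$ and $\mu^t_{x'}$ vanishes outside $B_x\times B_{x'}$ and is identified with its restriction to $B_x\times B_{x'}$. *)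

(* Defs.v *)
From mathcomp Require Import all_boot all_order all_algebra.
Set Implicit Arguments. Unset Strict Implicit. Unset Printing Implicit Defensive.
Import Order.TTheory GRing.Theory Num.Theory.
Local Open Scope ring_scope.

(* A simple, unoriented, locally finite graph on vertex type V is given by
   finite adjacency lists [nbrs x] = S_x (duplicate-free), with y ~ x iff
   y \in nbrs x; simplicity/unorientedness are hypotheses of the theorem. *)

Section Graph.
Variables (V : eqType) (nbrs : V -> seq V).

Definition adj : rel V := fun x y => y \in nbrs x.

Definition deg (x : V) : nat := size (nbrs x).

Definition ball (x : V) : seq V := x :: nbrs x.

Definition finite_dist (x x' : V) : Prop :=
  exists p : seq V, path adj x p && (last x p == x').

Variable R : realFieldType.

Definition lazy_rw (t : R) (x y : V) : R :=
  if y == x then 1 - t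
  else if y \in nbrs x then t / (deg x)%:R else 0.

(* couplings between mu^t_x and mu^t_x', as functions on V x V vanishing
   outside B_x x B_x' (identified with matrices indexed by B_x x B_x') *)
Definition coupling (t : R) (x x' : V) (xi : V -> V -> R) : Prop :=
  [/\ forall y y', 0 <= xi y y',
      forall y y', ~~ ((y \in ball x) && (y' \in ball x')) -> xi y y' = 0,
      forall y, y \in ball x -> \sum_(y' <- ball x') xi y y' = lazy_rw t x y
    & forall y', y' \in ball x' -> \sum_(y <- ball x) xi y y' = lazy_rw t x' y'].

Definition Emat (x x' : V) : V -> V -> R :=
  fun y y' => if (y == x) && (y' == x') then 1 else 0.

End Graph.

(* Main.v *)
Require Import Defs.
From mathcomp Require Import all_boot all_order all_algebra.
From mathcomp Require Import ring lra.
Import Order.TTheory GRing.Theory Num.Theory.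
Local Open Scope ring_scope.

Lemma sum_const_seq (R : realFieldType) (T : Type) (s : seq T) (c : R) :
  \sum_(y <- s) c = c *+ size s.
Proof.
elim: s => [|a s IH]; first by rewrite big_nil.
by rewrite big_cons IH mulrS.
Qed.

Section Aux.
Variables (V : eqType) (nbrs : V -> seq V) (R : realFieldType).
Hypothesis nbrs_irr : forall x, x \notin nbrs x.

Lemma rowE (x x' y : V) :
  \sum_(y' <- ball nbrs x') Emat R x x' y y' = (y == x)%:R.
Proof.
rewrite /ball big_cons big_seq big1 ?addr0.
  by rewrite /Emat eqxx andbT; case: (y == x).
move=> y' hy'; rewrite /Emat; case: (y' =P x') => [E|]; last by rewrite andbF.
by move: hy'; rewrite E (negbTE (nbrs_irr x')).
Qed.

Lemma colE (x x' y' : V) :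
  \sum_(y <- ball nbrs x) Emat R x x' y y' = (y' == x')%:R.
Proof.
rewrite /ball big_cons big_seq big1 ?addr0.
  by rewrite /Emat eqxx; case: (y' == x').
move=> y hy; rewrite /Emat; case: (y =P x) => [E|] //.
by move: hy; rewrite E (negbTE (nbrs_irr x)).
Qed.

Lemma rw_aff (a b : R) (x y : V) : a != 0 ->
  lazy_rw nbrs b x y = (y == x)%:R + b / a * (lazy_rw nbrs a x y - (y == x)%:R).
Proof.
move=> a0; rewrite /lazy_rw; case: (y == x) => /=.
  by field.
case: (y \in nbrs x); rewrite /= ?mulr0n ?subr0 ?add0r ?mulr0 //.
by rewrite mulrA divfK.
Qed.

Lemma diag_lb (a : R) (x x' : V) xi : 0 < a -> (0 < deg nbrs x')%N ->
  coupling nbrs a x x' xi -> 1 - 2 * a <= xi x x'.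
Proof.
move=> a0 hd [h0 hs hr hc].
have := hr x; rewrite /ball mem_head => /(_ isT).
rewrite big_cons /lazy_rw eqxx => Hrow.
have Hle : \sum_(y' <- nbrs x') xi x y' <= a.
  have -> : a = \sum_(y' <- nbrs x') (a / (deg nbrs x')%:R).
    rewrite sum_const_seq -/(deg nbrs x') -mulr_natr.
    have n0 : (deg nbrs x')%:R != 0 :> R by rewrite pnatr_eq0 -lt0n.
    by field.
  rewrite big_seq [X in _ <= X]big_seq; apply: ler_sum => y' hy'.
  have := hc y'; rewrite /ball inE hy' orbT => /(_ isT).
  rewrite big_cons /lazy_rw hy'.
  have -> : (y' == x') = false.
    by apply/negbTE; apply/eqP => E; move: hy'; rewrite E (negbTE (nbrs_irr x')).
  move=> <-; rewrite lerDl sumr_ge0 //.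
lra.
Qed.

Lemma transform (a b : R) (x x' : V) xi : 0 < a -> 0 < b ->
  coupling nbrs a x x' xi -> 0 <= 1 + b / a * (xi x x' - 1) ->
  coupling nbrs b x x' (fun y y' => Emat R x x' y y' + b / a * (xi y y' - Emat R x x' y y')).
Proof.
move=> a0 b0 [h0 hs hr hc] hd.
have a0' : a != 0 by rewrite gt_eqF.
have r0 : 0 <= b / a by rewrite divr_ge0 // ltW.
split.
- move=> y y'; rewrite /Emat.
  case: (y =P x) => [->|_]; case: (y' =P x') => [->|_] //=;
    by rewrite subr0 add0r mulr_ge0.
- move=> y y' hn; rewrite hs //.
  rewrite /Emat; case: (y =P x) => [E|]; case: (y' =P x') => [E'|] //=;
    try by rewrite subrr mulr0 addr0.
  by move: hn; rewrite E E' /ball !mem_head.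
- move=> y hy; rewrite big_split /= -mulr_sumr sumrB rowE hr //.
  by rewrite (@rw_aff a b x y a0').
- move=> y' hy'; rewrite big_split /= -mulr_sumr sumrB colE hc //.
  by rewrite (@rw_aff a b x' y' a0').
Qed.
End Aux.

Theorem lemma1 (V : eqType) (nbrs : V -> seq V) (R : realFieldType)
  (nbrs_uniq : forall x, uniq (nbrs x))
  (nbrs_sym : forall x y, (y \in nbrs x) = (x \in nbrs y))
  (nbrs_irr : forall x, x \notin nbrs x)
  (x x' : V) (hxx' : x != x') (hdist : finite_dist nbrs x x')
  (hdx : (0 < deg nbrs x)%N) (hdx' : (0 < deg nbrs x')%N) :
  exists t0 : R, 0 < t0 <= 1 /\
    forall s t : R, 0 < s <= t0 -> 0 < t <= t0 ->
      (* K^s - E_{xx'} = (s/t) (K^t - E_{xx'}) as sets of matrices *)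
      (forall xi, coupling nbrs s x x' xi ->
         exists zeta, coupling nbrs t x x' zeta /\
           forall y y', xi y y' - Emat R x x' y y'
                        = s / t * (zeta y y' - Emat R x x' y y')) /\
      (forall zeta, coupling nbrs t x x' zeta ->
         exists xi, coupling nbrs s x x' xi /\
           forall y y', xi y y' - Emat R x x' y y'
                        = s / t * (zeta y y' - Emat R x x' y y')).
Proof.
exists (1 / 2); split; first by apply/andP; split; lra.
move=> s t /andP [s0 s1] /andP [ht0 t1].
have s0' : s != 0 by rewrite gt_eqF.
have ht0' : t != 0 by rewrite gt_eqF.
split.
- move=> xi hxi.
  have lb := @diag_lb V nbrs R nbrs_irr s x x' xi s0 hdx' hxi.
  eexists; split.
    apply: (@transform V nbrs R nbrs_irr s t x x' xi s0 ht0 hxi).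
    have -> : 1 + t / s * (xi x x' - 1) = (1 - 2 * t) + t / s * (xi x x' - (1 - 2 * s)).
      by field.
    apply: addr_ge0; first lra.
    by apply: mulr_ge0; [rewrite divr_ge0 // ltW | lra].
  move=> y y' /=; set e := Emat _ _ _ _ _; set X := xi y y'.
  have h : s / t * (t / s) = 1 by rewrite mulrA divfK // divff.
  by rewrite (addrC e) addrK mulrA h mul1r.
- move=> zeta hz.
  have lb := @diag_lb V nbrs R nbrs_irr t x x' zeta ht0 hdx' hz.
  eexists; split.
    apply: (@transform V nbrs R nbrs_irr t s x x' zeta ht0 s0 hz).
    have -> : 1 + s / t * (zeta x x' - 1) = (1 - 2 * s) + s / t * (zeta x x' - (1 - 2 * t)).
      by field.
    apply: addr_ge0; first lra.
    by apply: mulr_ge0; [rewrite divr_ge0 // ltW | lra].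
  by move=> y y' /=; field.
Qed.
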